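(* Let $G=(V,E)$ be a graph with adjacency matrix $A=(a_{ij})$. Assume $f_\pi:\mathcal{A}_{RW}(G)\to\mathcal{A}(G)$ is an isomorphism of the form $f_\pi(e_i)=\alpha_i e_{\pi(i)}$ for all $i\in V$, where $\alpha_i\neq0$ are scalars and $\pi$ is a permutation of $V$. Then $$a_{i\,\pi^{-1}(k)}\,\alpha_{\pi^{-1}(k)}=\deg(i)\,\alpha_i^2\,a_{\pi(i)\,k}\quad\text{for all } i,k\in V.$$
   Context: Graphs are simple (no loops or multiple edges), connected, with countable (finite or infinite) vertex set $V$, and locally finite ($\deg(i)<\infty$ for all $i$, where $\deg(i)$ is the number of neighbors of $i$). The adjacency matrix is $A=(a_{ij})$ with $a_{ij}=1$ if $i,j$ are neighbors and $0$ otherwise. An evolution algebra over $\mathbb{R}$ is an algebra with a countable basis $\{e_i\}$ (natural basis) such that $e_i\cdot e_j=0$ for $i\ne j$ and $e_i\cdot e_i=\sum_k c_{ik}e_k$. $\mathcal{A}(G)$ has natural basis $\{e_i:i\in V\}$ with $e_i\cdot e_i=\sum_{k\in V}a_{ik}e_k$; $\mathcal{A}_{RW}(G)$ has natural basis $\{e_i:i\in V\}$ with $e_i\cdot e_i=\sum_{k\in V}\frac{a_{ik}}{\deg(i)}e_k$; in both, $e_i\cdot e_j=0$ for $i\ne j$. An isomorphism is a bijective linear map preserving the product. *)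

(* Defs.v *)
From HB Require Import structures.
From mathcomp Require Import all_boot all_order all_algebra.
From mathcomp Require Import finmap.
From mathcomp Require Import boolp classical_sets functions cardinality fsbigop reals.
Set Implicit Arguments. Unset Strict Implicit. Unset Printing Implicit Defensive.
Import Order.TTheory GRing.Theory Num.Theory.
Local Open Scope classical_set_scope.
Local Open Scope ring_scope.

Section Graphs.
Variable V : countType.
Variable adj : rel V.

Definition simple_graph : Prop := irreflexive adj /\ symmetric adj.

Definition connected_graph : Prop :=
  forall i j : V, exists p : seq V, path adj i p /\ last i p = j.

Definition locally_finite : Prop :=
  forall i : V, finite_set [set j | adj i j].

Definition deg (i : V) : nat := (#|` fset_set [set j | adj i j]|)%fset.

Variable R : realType.

Definition amat (i j : V) : R := (adj i j)%:R.

Definition c_adj (i k : V) : R := amat i k.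
Definition c_rw (i k : V) : R := amat i k / (deg i)%:R.
End Graphs.

Section EvolutionAlgebra.
Variables (V : countType) (R : realType).

(* An evolution algebra with natural basis {e_i : i in V} is realized on the
   space of finitely supported coordinate vectors V -> R. *)
Definition fsupp (x : V -> R) : Prop := finite_set [set v | x v != 0].

Definition ebasis (i : V) : V -> R := fun j => if j == i then 1 else 0.

(* product with structure constants C:  e_i . e_j = 0 (i<>j),
   e_i . e_i = sum_k C i k e_k, extended bilinearly. *)
Definition evprod (C : V -> V -> R) (x y : V -> R) : V -> R :=
  fun k => \sum_(i \in [set: V]) (x i * y i * C i k).

Definition ev_isomorphism (C1 C2 : V -> V -> R) (f : (V -> R) -> (V -> R)) : Prop :=
  [/\ (forall x, fsupp x -> fsupp (f x)),
      (forall (a : R) x y, fsupp x -> fsupp y ->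
          f (fun v => a * x v + y v) = (fun v => a * f x v + f y v)),
      (forall x y, fsupp x -> fsupp y -> f x = f y -> x = y),
      (forall y, fsupp y -> exists2 x, fsupp x & f x = y) &
      (forall x y, fsupp x -> fsupp y -> f (evprod C1 x y) = evprod C2 (f x) (f y))].
End EvolutionAlgebra.

(* Main.v *)
Require Import Defs.
From HB Require Import structures.
From mathcomp Require Import all_boot all_order all_algebra.
From mathcomp Require Import finmap.
From mathcomp Require Import boolp classical_sets functions cardinality fsbigop reals.
Import Order.TTheory GRing.Theory Num.Theory.
Local Open Scope ring_scope.

Lemma evprod_basis (V : countType) (R : realType) (C : V -> V -> R) (i : V) (a : R) :
  evprod C (fun j => a * ebasis R i j) (fun j => a * ebasis R i j)
  = (fun k => a ^+ 2 * C i k).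
Proof.
apply: funext => k; rewrite /evprod.
rewrite -(fsbig_widen [set i]) //; last first.
  move=> j [_ /= /eqP nji]; rewrite /ebasis (negbTE nji) /=.
  by rewrite !mulr0 mul0r.
by rewrite fsbig_set1 /ebasis eqxx !mulr1 expr2.
Qed.

Lemma lin_ext (V : countType) (R : realType) (f : (V -> R) -> (V -> R))
  (alpha : V -> R) (pi piinv : V -> V) :
  cancel pi piinv -> cancel piinv pi ->
  (forall i, f (ebasis R i) = (fun j => alpha i * ebasis R (pi i) j)) ->
  (forall (a : R) x y, fsupp x -> fsupp y ->
          f (fun v => a * x v + y v) = (fun v => a * f x v + f y v)) ->
  forall s : seq V, forall x, (forall v, x v != 0 -> v \in s) ->
    f x = (fun k => x (piinv k) * alpha (piinv k)).
Proof.
move=> pK piK fe lin s.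
have fs : forall x : V -> R, (forall v, x v != 0 -> v \in s) -> fsupp x.
  move=> x H; apply: (sub_finite_set _ (finite_seq s)) => v /= /H; exact.
have f0 : f (fun _ => 0) = (fun _ => 0).
  have z : fsupp (fun _ : V => (0 : R)).
    by apply: (sub_finite_set _ (finite_seq [::])) => v /=; rewrite eqxx.
  have := lin 1 _ _ z z; rewrite mul1r addr0 => H.
  apply: funext => v; have := congr1 (fun g => g v) H => /= E.
  rewrite mul1r in E.
  have : f (fun _ => 0) v + f (fun _ => 0) v - f (fun _ => 0) v = 0 by rewrite -E subrr.
  by rewrite addrK.
elim: s fs => [|j s IH] fs x Hx.
  have -> : x = (fun _ => 0).
    by apply: funext => v; apply/eqP/negPn/negP => /Hx; rewrite in_nil.
  by rewrite f0; apply: funext => k; rewrite mul0r.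
set x' := fun v => if v == j then 0 else x v.
have Hx' : forall v, x' v != 0 -> v \in s.
  move=> v; rewrite /x'; case: (eqVneq v j) => [_|vj xv]; first by rewrite eqxx.
  by move: (Hx v xv); rewrite in_cons (negbTE vj).
have fx' : fsupp x'.
  apply: (sub_finite_set _ (finite_seq s)) => v /= /Hx'; exact.
have fej : fsupp (ebasis R j).
  apply: (sub_finite_set _ (finite_seq [:: j])) => v /=.
  rewrite /ebasis; case: ifP => [/eqP -> _|_]; first by rewrite mem_seq1.
  by rewrite eqxx.
have -> : x = (fun v => x j * ebasis R j v + x' v).
  apply: funext => v; rewrite /x' /ebasis; case: eqP => [->|_].
    by rewrite mulr1 addr0.
  by rewrite mulr0 add0r.
rewrite lin // fe (IH _ _ Hx'); last first.
  move=> y Hy; apply: (sub_finite_set _ (finite_seq s)) => v /= /Hy; exact.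
apply: funext => k /=; rewrite /x' /ebasis.
case: (eqVneq (piinv k) j) => [<-|nj].
  by rewrite piK eqxx !mulr1 mul0r !addr0.
have -> : (k == pi j) = false.
  by apply/negbTE; apply: contra nj => /eqP ->; rewrite pK.
by rewrite !mulr0 !add0r.
Qed.

Theorem proposition2p13 (V : countType) (adj : rel V) (R : realType)
    (f : (V -> R) -> (V -> R)) (alpha : V -> R) (pi piinv : V -> V) :
  simple_graph adj -> connected_graph adj -> locally_finite adj ->
  cancel pi piinv -> cancel piinv pi ->
  (forall i, alpha i != 0) ->
  (forall i, f (ebasis R i) = (fun j => alpha i * ebasis R (pi i) j)) ->
  ev_isomorphism (c_rw adj R) (c_adj adj R) f ->
  forall i k : V,
    amat adj R i (piinv k) * alpha (piinv k)
    = (deg adj i)%:R * alpha i ^+ 2 * amat adj R (pi i) k.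
Proof.
move=> _ _ lf pK piK _ fe [_ lin _ _ hom] i k.
have fei : fsupp (ebasis R i).
  apply: (sub_finite_set _ (finite_seq [:: i])) => v /=.
  rewrite /ebasis; case: ifP => [/eqP -> _|_]; first by rewrite mem_seq1.
  by rewrite eqxx.
have := hom _ _ fei fei.
have e1 : ebasis R i = (fun j => 1 * ebasis R i j).
  by apply: funext => j; rewrite mul1r.
rewrite fe {1 2}e1 !evprod_basis expr1n.
have [s Hs] := (finite_seqP _).1 (lf i).
rewrite (@lin_ext V R f alpha pi piinv pK piK fe lin s); last first.
  move=> v; rewrite mul1r /c_rw /amat.
  have : adj i v -> v \in s.
    move=> a; have : ([set j | adj i j] : set V)%classic v by [].
    by rewrite Hs.
  move=> H; case: (boolP (adj i v)) => [/H //|_].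
  by rewrite mul0r eqxx.
move=> /(congr1 (fun g => g k)) /=; rewrite mul1r /c_rw /c_adj.
have [d0|dn0] := eqVneq ((deg adj i)%:R : R) 0.
  rewrite d0 !mul0r => _.
  have : adj i (piinv k) = false.
    apply/negP => a.
    move/eqP: d0; rewrite pnatr_eq0 /deg => /eqP/cardfs0_eq.
    move=> /(fset_set_set0 (lf i)) /(congr1 (fun P => P (piinv k))) /=.
    by move=> E; move: a; rewrite E.
  by rewrite /amat => ->; rewrite mul0r.
move=> E; rewrite -mulrA -E mulrA mulrCA mulfV // mulr1; by [].
Qed.
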